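(* The set of spacelike pairs $\{(x,y)\in\mathrm{dS}^d\times\mathrm{dS}^d:\beta(x-y,x-y)<0\}$ coincides with $$\mathrm{SO}_{1,d}(\mathbb R).(W^+\times(-W^+))=\bigcup_{W\in\mathcal W}W\times(-W).$$ For $d>1$ it also coincides with $\mathrm{SO}_{1,d}(\mathbb R)_e.(W^+\times(-W^+))$.
   Context: Let $d\ge1$, $\beta(x,y)=x_0y_0-x_1y_1-\dots-x_dy_d$ on $\mathbb R^{1+d}$, $\mathrm{dS}^d=\{x\in\mathbb R^{1+d}:\beta(x,x)=-1\}$ (de Sitter space). $\mathrm{SO}_{1,d}(\mathbb R)$ (determinant one, preserving $\beta$) acts diagonally on pairs. The canonical wedge is $W^+=\{x\in\mathrm{dS}^d:x_1>|x_0|\}$, and a wedge region is a set $W=g.W^+$ with $g\in\mathrm{SO}_{1,d}(\mathbb R)$; $\mathcal W$ is the set of wedge regions. *)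

(* Defs.v *)
From HB Require Import structures.
From mathcomp Require Import all_boot all_order all_algebra.
From mathcomp Require Import all_classical all_reals.
From mathcomp Require Import all_analysis.
Import numFieldNormedType.Exports.
Set Implicit Arguments. Unset Strict Implicit. Unset Printing Implicit Defensive.
Import Order.TTheory GRing.Theory Num.Theory.
Local Open Scope classical_set_scope.
Local Open Scope ring_scope.

Section DeSitter.
Variable R : realType.
Variable d : nat.

Definition vec := 'cV[R]_(d.+1).

Definition beta (x y : vec) : R :=
  \sum_(i < d.+1) (if i == ord0 then 1 else -1) * x i ord0 * y i ord0.

Definition dS : set vec := [set x | beta x x = -1].

Definition SO1d : set 'M[R]_(d.+1) :=
  [set g | \det g = 1 /\ forall x y : vec, beta (g *m x) (g *m y) = beta x y].

Definition SO1d_e : set 'M[R]_(d.+1) := @connected_component 'M[R]_(d.+1) SO1d 1%:M.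

(* canonical wedge W^+ = {x in dS : x_1 > |x_0|}  (index 1 = inord 1, valid as d >= 1) *)
Definition Wplus : set vec :=
  [set x | dS x /\ `|x ord0 ord0| < x (inord 1) ord0].

Definition actset (g : 'M[R]_(d.+1)) (S : set vec) : set vec := [set g *m x | x in S].
Definition negset (S : set vec) : set vec := [set - x | x in S].

Definition wedges : set (set vec) := [set W | exists2 g, SO1d g & W = actset g Wplus].

Definition pair_orbit (G : set 'M[R]_(d.+1)) (S : set (vec * vec)) : set (vec * vec) :=
  [set p | exists g, G g /\ exists2 q, S q & p = (g *m q.1, g *m q.2)].

Definition spacelike_pairs : set (vec * vec) :=
  [set p | dS p.1 /\ dS p.2 /\ beta (p.1 - p.2) (p.1 - p.2) < 0].

End DeSitter.

Arguments beta R d : clear implicits.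
Arguments dS R d : clear implicits.
Arguments SO1d R d : clear implicits.
Arguments SO1d_e R d : clear implicits.
Arguments Wplus R d : clear implicits.
Arguments wedges R d : clear implicits.
Arguments spacelike_pairs R d : clear implicits.

(* Main.v *)
Require Import Defs.
From HB Require Import structures.
From mathcomp Require Import all_boot all_order all_algebra.
From mathcomp Require Import all_classical all_reals.
From mathcomp Require Import all_analysis.
From mathcomp Require Import ring lra.
Import numFieldNormedType.Exports.
Import Order.TTheory GRing.Theory Num.Theory.
Local Open Scope classical_set_scope.
Local Open Scope ring_scope.

Section Lor.
Variable R : realType.
Variable n : nat.
Local Notation D := n.+1.
Local Notation vec := 'cV[R]_(n.+2).
Local Notation b := (beta R D).

Definition sg (i : 'I_(n.+2)) : R := if i == ord0 then 1 else -1.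

Lemma betaE (x y : vec) : b x y = \sum_i sg i * x i 0 * y i 0.
Proof. by []. Qed.

Lemma betaC x y : b x y = b y x.
Proof. rewrite !betaE; apply: eq_bigr => i _; ring. Qed.

Lemma betaDl x y z : b (x + y) z = b x z + b y z.
Proof. rewrite !betaE -big_split /=; apply: eq_bigr => i _; rewrite !mxE; ring. Qed.

Lemma betaZl a x z : b (a *: x) z = a * b x z.
Proof. rewrite !betaE mulr_sumr; apply: eq_bigr => i _; rewrite !mxE; ring. Qed.

Lemma betaNl x z : b (- x) z = - b x z.
Proof. by rewrite -scaleN1r betaZl mulN1r. Qed.

Lemma betaBl x y z : b (x - y) z = b x z - b y z.
Proof. by rewrite betaDl betaNl. Qed.

Lemma betaDr x y z : b z (x + y) = b z x + b z y.
Proof. by rewrite betaC betaDl !(betaC z). Qed.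
Lemma betaZr a x z : b z (a *: x) = a * b z x.
Proof. by rewrite betaC betaZl betaC. Qed.
Lemma betaNr x z : b z (- x) = - b z x.
Proof. by rewrite betaC betaNl betaC. Qed.
Lemma betaBr x y z : b z (x - y) = b z x - b z y.
Proof. by rewrite betaC betaBl !(betaC z). Qed.

Definition i1 : 'I_(n.+2) := inord 1.
Lemma i1E : i1 = lift ord0 ord0.
Proof. by apply: val_inj; rewrite /= inordK. Qed.

Lemma beta_split x y : b x y = x ord0 0 * y ord0 0 - x i1 0 * y i1 0
   - \sum_(i < n) x (lift ord0 (lift ord0 i)) 0 * y (lift ord0 (lift ord0 i)) 0.
Proof.
rewrite betaE big_ord_recl big_ord_recl i1E /sg /= !mul1r.
rewrite [X in _ + (_ + X)](_ : _ = - \sum_(i < n) x (lift ord0 (lift ord0 i)) 0 * y (lift ord0 (lift ord0 i)) 0).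
  by rewrite !mulN1r; ring.
rewrite -sumrN; apply: eq_bigr => i _; rewrite mulN1r mulNr //.
Qed.

Lemma beta_le x : b x x <= x ord0 0 ^+ 2 - x i1 0 ^+ 2.
Proof.
rewrite beta_split !expr2 lerBlDr lerDl; apply: sumr_ge0 => i _; rewrite -expr2; exact: sqr_ge0.
Qed.

Lemma ord0_neq_i1 : (ord0 == i1) = false.
Proof. by rewrite i1E. Qed.


Definition ev (i : 'I_(n.+2)) : vec := \col_j ((j == i)%:R).

Lemma beta_ev_r x i : b x (ev i) = sg i * x i 0.
Proof.
rewrite betaE (bigD1 i) //= big1 ?addr0; first by rewrite !mxE eqxx mulr1.
by move=> j /negbTE ji; rewrite !mxE ji mulr0.
Qed.
Lemma beta_ev_l x i : b (ev i) x = sg i * x i 0.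
Proof. by rewrite betaC beta_ev_r. Qed.

Definition rrow (v : vec) : 'rV[R]_(n.+2) := (2 / b v v) *: \row_j (sg j * v j 0).
Definition Refl (v : vec) : 'M[R]_(n.+2) := 1%:M - v *m rrow v.

Lemma rrow_mul v z : (rrow v *m z) 0 0 = 2 / b v v * b v z.
Proof.
rewrite -scalemxAl mxE; congr (_ * _); rewrite mxE betaE; apply: eq_bigr => i _.
by rewrite !mxE.
Qed.

Lemma ReflE v z : Refl v *m z = z - (2 / b v v * b v z) *: v.
Proof.
rewrite /Refl mulmxBl mul1mx -mulmxA; congr (_ - _).
apply/matrixP => i j; rewrite !mxE big_ord1 (ord1 j) rrow_mul mulrC.
by [].
Qed.

Lemma Refl_fix v z : b v z = 0 -> Refl v *m z = z.
Proof. by move=> h; rewrite ReflE h mulr0 scale0r subr0. Qed.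

Lemma Refl_self v : b v v != 0 -> Refl v *m v = - v.
Proof.
move=> h; rewrite ReflE mulfVK // scaler_nat.
by rewrite mulr2n opprD addrA subrr sub0r.
Qed.

Lemma Refl_beta v x y : b v v != 0 -> b (Refl v *m x) (Refl v *m y) = b x y.
Proof.
move=> h; rewrite !ReflE !betaBl !betaBr !betaZl !betaZr (betaC x v).
by field.
Qed.

Lemma mx_ext (A B : 'M[R]_(n.+2)) : (forall z : vec, A *m z = B *m z) -> A = B.
Proof.
move=> H; apply/matrixP => i j.
have := congr1 (fun M : vec => M i 0) (H (delta_mx j 0)).
by rewrite -!colE !mxE.
Qed.

Lemma Refl_invol v : b v v != 0 -> Refl v *m Refl v = 1%:M.
Proof.
move=> h; apply: mx_ext => z; rewrite mul1mx -mulmxA.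
rewrite [Refl v *m z]ReflE mulmxBr -scalemxAr Refl_self // ReflE.
by rewrite scalerN opprK subrK.
Qed.

Lemma det_rank1 m (a : 'cV[R]_m) (c : 'rV[R]_m) :
  \det (1%:M - a *m c) = 1 - (c *m a) 0 0.
Proof.
pose M := block_mx (1%:M : 'M[R]_1) c a (1%:M : 'M[R]_m).
have E1 : M = block_mx 1%:M 0 a 1%:M *m block_mx 1%:M c 0 (1%:M - a *m c).
  rewrite mulmx_block ?mul1mx ?mulmx0 ?mul0mx ?mulmx1 ?addr0 ?add0r.
  by rewrite addrC subrK.
have E2 : M = block_mx 1%:M c 0 1%:M *m block_mx (1%:M - c *m a) 0 a 1%:M.
  rewrite mulmx_block ?mul1mx ?mulmx0 ?mul0mx ?mulmx1 ?addr0 ?add0r.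
  by rewrite subrK.
have := congr1 determinant E1; rewrite E2 !det_mulmx det_lblock det_ublock.
rewrite det_ublock det_lblock !det1 !mul1r !mulr1 det_mx11 => <-.
by rewrite !mxE eqxx.
Qed.

Lemma det_Refl v : b v v != 0 -> \det (Refl v) = -1.
Proof.
move=> h; rewrite /Refl det_rank1 rrow_mul mulfVK //; lra.
Qed.


Local Notation SO := (SO1d R D).

Lemma SO_mul g h : SO g -> SO h -> SO (g *m h).
Proof.
move=> [dg pg] [dh ph]; split; first by rewrite det_mulmx dg dh mulr1.
by move=> x y; rewrite -!mulmxA pg ph.
Qed.

Lemma Refl2_SO u w : b u u != 0 -> b w w != 0 -> SO (Refl u *m Refl w).
Proof.
move=> hu hw; split; first by rewrite det_mulmx !det_Refl //; lra.
by move=> x y; rewrite -!mulmxA !Refl_beta.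
Qed.

Lemma beta_ev i : b (ev i) (ev i) = sg i.
Proof. by rewrite beta_ev_r !mxE eqxx mulr1. Qed.

Lemma sg_neq0 i : i != ord0 -> sg i = -1.
Proof. by rewrite /sg => /negbTE ->. Qed.

Lemma i1_neq0 : i1 != ord0.
Proof. by rewrite eq_sym ord0_neq_i1. Qed.

Lemma ev_spacelike i : i != ord0 -> b (ev i) (ev i) < 0.
Proof. by move=> h; rewrite beta_ev sg_neq0 // ltrN10. Qed.

Lemma Refl_ev_coord (i : 'I_(n.+2)) (z : vec) (j : 'I_(n.+2)) : i != ord0 ->
  (Refl (ev i) *m z) j 0 = z j 0 - ((j == i)%:R : R) * 2 * z i 0.
Proof.
move=> hi; rewrite ReflE beta_ev beta_ev_l sg_neq0 // !mxE.
by rewrite mulN1r invrN1; ring.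
Qed.

Lemma Wplus_sum p q : Wplus R D p -> Wplus R D q -> b (p + q) (p + q) < 0.
Proof.
move=> [_ hp] [_ hq]; apply: (le_lt_trans (beta_le _)).
rewrite !mxE subr_lt0 -/i1.
have h0 : `|p ord0 0 + q ord0 0| < p i1 0 + q i1 0.
  apply: (le_lt_trans (ler_normD _ _)); exact: ltrD.
move: h0; rewrite ltr_norml => /andP [h1 h2]; nra.
Qed.

Lemma cts_add (f g : R -> R) x : {for x, continuous f} -> {for x, continuous g} ->
  {for x, continuous (fun t => f t + g t)}.
Proof. by move=> hf hg; exact: (cvgD hf hg). Qed.
Lemma cts_mul (f g : R -> R) x : {for x, continuous f} -> {for x, continuous g} ->
  {for x, continuous (fun t => f t * g t)}.
Proof. by move=> hf hg; exact: (continuousM hf hg). Qed.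
Lemma cts_cst (c : R) x : {for x, continuous (fun _ : R => c)}.
Proof. exact: cvg_cst. Qed.
Lemma cts_id x : {for x, continuous (fun t : R => t)}.
Proof. exact: cvg_id. Qed.
Lemma cts_sum m (F : 'I_m -> R -> R) x : (forall k, {for x, continuous (F k)}) ->
  {for x, continuous (fun t => \sum_(k < m) F k t)}.
Proof.
elim: m F => [|m IH] F H.
  have -> : (fun t => \sum_(k < 0) F k t) = (fun _ => 0) by apply: funext => t; rewrite big_ord0.
  exact: cts_cst.
have -> : (fun t => \sum_(k < m.+1) F k t) =
   (fun t => \sum_(k < m) F (widen_ord (leqnSn m) k) t + F ord_max t).
  by apply: funext => t; rewrite big_ord_recr.
apply: cts_add; last exact: H.
by apply: IH => k; exact: H.
Qed.

Definition ctsmx (x : R) (f : R -> 'M[R]_(n.+2)) :=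
  forall i j, {for x, continuous (fun t => f t i j)}.

Lemma ctsmx_cvg x f : ctsmx x f -> {for x, continuous f}.
Proof.
move=> H A /= hA; case: hA => P hP sPA.
apply: (@filterS _ _ _ [set t | forall i j, P i j (f t i j)]); last first.
apply: (@filter_forall _ _ (fun i t => forall j, P i j (f t i j)) (nbhs x)) => i.
apply: (@filter_forall _ _ (fun j t => P i j (f t i j)) (nbhs x)) => j.
exact: (H i j _ (hP i j)).
by move=> t ht; exact: sPA.
Qed.

Lemma ctsmx_mul x f g : ctsmx x f -> ctsmx x g -> ctsmx x (fun t => f t *m g t).
Proof.
move=> hf hg i j.
have -> : (fun t => (f t *m g t) i j) = (fun t => \sum_k f t i k * g t k j).
  by apply: funext => t; rewrite mxE.
apply: cts_sum => k; exact: cts_mul.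
Qed.

Lemma ctsmx_cst x (M : 'M[R]_(n.+2)) : ctsmx x (fun _ => M).
Proof. move=> i j; exact: cts_cst. Qed.

Lemma Refl_entry v i j :
  Refl v i j = (i == j)%:R - v i 0 * (2 / b v v * (sg j * v j 0)).
Proof. by rewrite /Refl !mxE big_ord1 !mxE. Qed.

Definition lin (a c : vec) (t : R) : vec := (1 - t) *: a + t *: c.

Lemma lin_entry a c t i : lin a c t i 0 = (1 - t) * a i 0 + t * c i 0.
Proof. by rewrite !mxE. Qed.

Lemma cts_lin a c x i : {for x, continuous (fun t => lin a c t i 0)}.
Proof.
have -> : (fun t => lin a c t i 0) = (fun t => (1 - t) * a i 0 + t * c i 0).
  by apply: funext => t; rewrite lin_entry.
apply: cts_add; apply: cts_mul; try exact: cts_cst; try exact: cts_id.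
have -> : (fun t : R => 1 - t) = (fun t => 1 + (-1) * t).
  by apply: funext => t; rewrite mulN1r.
apply: cts_add; [exact: cts_cst|apply: cts_mul; [exact: cts_cst|exact: cts_id]].
Qed.

Lemma ctsmx_Refl_lin a c x : b (lin a c x) (lin a c x) != 0 ->
  ctsmx x (fun t => Refl (lin a c t)).
Proof.
move=> h i j.
have -> : (fun t => Refl (lin a c t) i j) = (fun t => (i == j)%:R +
   (-1) * (lin a c t i 0 * (2 * (b (lin a c t) (lin a c t))^-1 * (sg j * lin a c t j 0)))).
  by apply: funext => t; rewrite Refl_entry mulN1r.
apply: cts_add; first exact: cts_cst.
apply: cts_mul; first exact: cts_cst.
apply: cts_mul; first exact: cts_lin.
apply: cts_mul; last by apply: cts_mul; [exact: cts_cst|exact: cts_lin].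
apply: cts_mul; first exact: cts_cst.
apply: continuousV => //.
have -> : (fun t => b (lin a c t) (lin a c t)) =
   (fun t => \sum_k sg k * lin a c t k 0 * lin a c t k 0).
  by apply: funext => t; rewrite betaE.
apply: cts_sum => k; apply: cts_mul; last exact: cts_lin.
apply: cts_mul; [exact: cts_cst|exact: cts_lin].
Qed.


Lemma Refl_opp v : Refl (- v) = Refl v.
Proof.
apply/matrixP => i j; rewrite !Refl_entry betaNl betaNr opprK !mxE; ring.
Qed.

Lemma lin_neg a c t : b a a < 0 -> b c c < 0 -> b a c <= 0 -> 0 <= t <= 1 ->
  b (lin a c t) (lin a c t) < 0.
Proof.
move=> ha hc hac /andP[t0 t1].
rewrite /lin !betaDl !betaDr !betaZl !betaZr (betaC c a).
set A := b a a; set B := b c c; set C := b a c.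
have st : 0 <= (1 - t) * t by apply: mulr_ge0; lra.
have e1 : (1 - t) * t * C <= 0 := mulr_ge0_le0 st hac.
have e2 : (1 - t) * (1 - t) * A + t * t * B < 0.
  have [->|tp] := eqVneq t 0; first by rewrite subr0 !mul1r !mul0r addr0.
  have tpos : 0 < t by rewrite lt_neqAle eq_sym tp t0.
  have : t * t * B < 0 by rewrite pmulr_rlt0 // mulr_gt0.
  have h0 : 0 <= (1 - t) * (1 - t) by apply: mulr_ge0; lra.
  have := mulr_ge0_le0 h0 (ltW ha); rewrite -/A; lra.
nra.
Qed.

Lemma lin0 a c : lin a c 0 = a.
Proof. by rewrite /lin subr0 scale1r scale0r addr0. Qed.
Lemma lin1 a c : lin a c 1 = c.
Proof. by rewrite /lin subrr scale0r scale1r add0r. Qed.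

Definition flipc (a c : vec) := if b a c <= 0 then c else - c.

Lemma flipc_prop a c : b a (flipc a c) <= 0 /\ b (flipc a c) (flipc a c) = b c c
   /\ Refl (flipc a c) = Refl c.
Proof.
rewrite /flipc; case: ifP => h; first by [].
rewrite betaNr betaNl betaNr opprK Refl_opp; split => //.
rewrite lerNl oppr0; apply/ltW; rewrite ltNge h //.
Qed.

Lemma SOe_4 a c e f : b a a < 0 -> b c c < 0 -> b e e < 0 -> b f f < 0 ->
  SO1d_e R D (Refl a *m Refl c *m Refl e *m Refl f).
Proof.
move=> ha hc he hf.
have [hac [hcc Rc]] := flipc_prop a c.
have [hef [hff Rf]] := flipc_prop e f.
set c' := flipc a c in hac hcc Rc; set f' := flipc e f in hef hff Rf.
pose phi t := Refl (lin a c' t) *m Refl c *m Refl (lin e f' t) *m Refl f.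
have hin : forall t, 0 <= t <= 1 -> b (lin a c' t) (lin a c' t) < 0 /\
   b (lin e f' t) (lin e f' t) < 0.
  move=> t ht; split; apply: lin_neg => //; by rewrite ?hcc ?hff.
have phiSO : forall t, 0 <= t <= 1 -> SO (phi t).
  move=> t /hin [h1 h2]; rewrite /phi -!mulmxA mulmxA.
  by apply: SO_mul; apply: Refl2_SO; rewrite lt_eqF.
have phi0 : phi 0 = Refl a *m Refl c *m Refl e *m Refl f by rewrite /phi !lin0.
have phi1 : phi 1 = 1%:M.
  rewrite /phi !lin1 Rc Rf Refl_invol ?lt_eqF // mul1mx Refl_invol ?lt_eqF //.
have sub : phi @` `[0, 1] `<=` SO.
  move=> M [t ht <-]; apply: phiSO; move: ht; by rewrite /= in_itv.
have con : connected (phi @` `[0, 1]).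
  apply: connected_continuous_connected; first exact: segment_connected.
  apply: continuous_in_subspaceT => t ht; apply: ctsmx_cvg.
  have /hin [h1 h2] : 0 <= t <= 1 by move: ht; rewrite inE /= in_itv.
  apply: ctsmx_mul; last exact: ctsmx_cst.
  apply: ctsmx_mul; last by apply: ctsmx_Refl_lin; rewrite lt_eqF.
  apply: ctsmx_mul; last exact: ctsmx_cst.
  by apply: ctsmx_Refl_lin; rewrite lt_eqF.
have := @connected_component_max _ SO (phi @` `[0, 1]) 1%:M.
rewrite /SO1d_e; apply => //.
  by exists 1 => //; rewrite /= in_itv /= ler01 lexx.
by exists 0 => //; rewrite /= in_itv /= ler01 lexx.
Qed.


Lemma swap_Refl a c : b a a = b c c -> b (a - c) (a - c) != 0 -> Refl (a - c) *m a = c.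
Proof.
move=> e h; rewrite ReflE.
have -> : 2 / b (a - c) (a - c) * b (a - c) a = 1.
  move: h; rewrite !betaBl !betaBr (betaC c a) e => h.
  by field; move: h; rewrite -e; apply: contra => /eqP h; apply/eqP; lra.
by rewrite scale1r opprB addrC subrK.
Qed.

Lemma beta_le0 z : b z z <= z ord0 0 ^+ 2.
Proof. apply: (le_trans (beta_le z)); rewrite lerBlDr lerDl; exact: sqr_ge0. Qed.

Lemma beta_two (H : forall j : 'I_(n.+2), j = ord0 \/ j = i1) z :
  b z z = z ord0 0 ^+ 2 - z i1 0 ^+ 2.
Proof.
rewrite beta_split big1 ?subr0 ?expr2 //.
move=> i _; exfalso; case: (H (lift ord0 (lift ord0 i))) => /eqP.
  by rewrite eq_sym (negbTE (neq_lift _ _)).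
by rewrite i1E (inj_eq (@lift_inj _ _)) eq_sym (negbTE (neq_lift _ _)).
Qed.

Definition Fl (z : vec) : vec := \col_i (if i == ord0 then z i 0 else - z i 0).

Lemma Fl_beta z : b z (Fl z) = 2 * z ord0 0 ^+ 2 - b z z.
Proof.
apply/eqP; rewrite eq_sym subr_eq !betaE -big_split /= (bigD1 ord0) //= big1 ?addr0.
  by rewrite !mxE /sg eqxx; apply/eqP; ring.
by move=> i /negbTE hi; rewrite !mxE /sg hi; ring.
Qed.

Lemma Fl_beta2 z : b (Fl z) (Fl z) = b z z.
Proof.
rewrite !betaE; apply: eq_bigr => i _; rewrite !mxE; case: ifP => _; ring.
Qed.

Lemma ev_coord i j : (ev i) j 0 = (j == i)%:R.
Proof. by rewrite mxE. Qed.

Lemma wstar (v1 : vec) (c k : R) : v1 i1 0 = 0 -> -1 < c -> b v1 v1 = 2 * c - 2 ->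
  0 <= k -> k ^+ 2 = 2 + 2 * c ->
  exists w : vec, [/\ w i1 0 = 0, b w w = b v1 v1, `|w ord0 0| < k,
     b (v1 - w) (v1 - w) <= 0 & (b (v1 - w) (v1 - w) = 0 -> `|v1 ord0 0| < k)].
Proof.
move=> h1 hc hv hk0 hk.
have bexp : forall w, b (v1 - w) (v1 - w) = b v1 v1 - 2 * b v1 w + b w w.
  by move=> w; rewrite !betaBl !betaBr (betaC w v1); ring.
have hv0 := beta_le0 v1.
have n0sq : `|v1 ord0 0| ^+ 2 = v1 ord0 0 ^+ 2 by rewrite real_normK ?num_real.
have n0ge : 0 <= `|v1 ord0 0| by [].
have [c1|c1|c1] := ltgtP c 1.
-
  have [[j [j0 j1]]|nj] := pselect (exists j : 'I_(n.+2), j != ord0 /\ j != i1); last first.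
    exfalso; have H : forall j : 'I_(n.+2), j = ord0 \/ j = i1.
      move=> j; case: (eqVneq j ord0) => [->|j0]; first by left.
      case: (eqVneq j i1) => [->|j1]; first by right.
      by exfalso; apply: nj; exists j.
    have := beta_two H v1; rewrite h1 hv; nra.
  set bb := Num.sqrt (2 - 2 * c).
  have hbb : bb ^+ 2 = 2 - 2 * c by rewrite sqr_sqrtr //; lra.
  have bb0 : 0 <= bb by exact: sqrtr_ge0.
  set sgn := (if 0 <= v1 j 0 then - bb else bb).
  have hs : sgn * v1 j 0 = - bb * `|v1 j 0|.
    rewrite /sgn; case: ifP => h.
      by rewrite ger0_norm.
    by rewrite ltr0_norm ?ltNge ?h //; ring.
  exists (sgn *: ev j); split.
  + by rewrite !mxE eq_sym (negbTE j1) mulr0.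
  + rewrite betaZl betaZr beta_ev sg_neq0 // hv.
    have ss : sgn * sgn = bb * bb by rewrite /sgn; case: ifP => _; ring.
    move: hbb; rewrite expr2; nra.
  + rewrite !mxE eq_sym (negbTE j0) mulr0 normr0.
    have : 0 < k ^+ 2 by rewrite hk; lra.
    by rewrite expr2 pmulr_lgt0 // ?lt_neqAle //; nra.
  + rewrite bexp betaZr beta_ev_r sg_neq0 // betaZl betaZr beta_ev sg_neq0 // hv.
    have : 0 <= bb * `|v1 j 0| by apply: mulr_ge0.
    have : sgn * sgn = bb * bb by rewrite /sgn; case: ifP => _; ring.
    move: hbb hs; rewrite expr2; nra.
  + move=> h; exfalso; move: h.
    rewrite bexp betaZr beta_ev_r sg_neq0 // betaZl betaZr beta_ev sg_neq0 // hv.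
    have : 0 <= bb * `|v1 j 0| by apply: mulr_ge0.
    have : sgn * sgn = bb * bb by rewrite /sgn; case: ifP => _; ring.
    move: hbb hs; rewrite expr2; nra.
-
  set a := Num.sqrt (2 * c - 2).
  have ha : a ^+ 2 = 2 * c - 2 by rewrite sqr_sqrtr //; lra.
  have a0 : 0 < a by rewrite sqrtr_gt0; lra.
  have age : a <= `|v1 ord0 0|.
    have : a ^+ 2 <= `|v1 ord0 0| ^+ 2 by rewrite n0sq ha -hv.
    rewrite !expr2; nra.
  have ak : a < k by move: hk ha; rewrite !expr2; nra.
  set sgn := (if 0 <= v1 ord0 0 then a else - a).
  have hs : sgn * v1 ord0 0 = a * `|v1 ord0 0|.
    rewrite /sgn; case: ifP => h; first by rewrite ger0_norm.
    by rewrite ltr0_norm ?ltNge ?h //; ring.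
  have ss : sgn * sgn = a * a by rewrite /sgn; case: ifP => _; ring.
  have bw : b (v1 - sgn *: ev ord0) (v1 - sgn *: ev ord0) = 2 * (a * a) - 2 * (a * `|v1 ord0 0|).
    rewrite bexp betaZr beta_ev_r betaZl betaZr beta_ev /sg eqxx /= hv.
    move: ha hs ss; rewrite expr2; nra.
  exists (sgn *: ev ord0); split.
  + by rewrite !mxE eq_sym ord0_neq_i1 mulr0.
  + rewrite betaZl betaZr beta_ev /sg eqxx mulr1 hv ss -expr2 ha; ring.
  + rewrite !mxE eqxx mulr1 /sgn; case: ifP => _; rewrite ?normrN gtr0_norm //.
  + rewrite bw; nra.
  + rewrite bw => h; nra.
-
  subst c.
  have k2 : 1 < k by move: hk; rewrite expr2; nra.
  have [z0|nz] := eqVneq (v1 ord0 0) 0.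
    exists 0; split.
    + by rewrite mxE.
    + by rewrite hv -(scale0r (0:vec)) betaZl mul0r; ring.
    + by rewrite mxE normr0; lra.
    + by rewrite subr0 hv; lra.
    + by rewrite z0 normr0; lra.
  have t0 : 0 < `|v1 ord0 0| by rewrite normr_gt0.
  set t := `|v1 ord0 0| in t0 n0sq n0ge *.
  exists (t^-1 *: Fl v1); split.
  + by rewrite !mxE eq_sym ord0_neq_i1 h1 oppr0 mulr0.
  + by rewrite betaZl betaZr Fl_beta2 hv; ring.
    rewrite !mxE eqxx normrM normfV -/t ger0_norm // mulVf ?lt0r_neq0 //.
  + rewrite bexp betaZr Fl_beta betaZl betaZr Fl_beta2 hv -n0sq.
    have e2 : 2 * 1 - 2 = 0 :> R by ring.
    rewrite e2.
    have -> : t^-1 * (2 * t ^+ 2 - 0) = 2 * t by field; rewrite lt0r_neq0.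
    lra.
  + rewrite bexp betaZr Fl_beta betaZl betaZr Fl_beta2 hv -n0sq.
    have e2 : 2 * 1 - 2 = 0 :> R by ring.
    rewrite e2.
    have -> : t^-1 * (2 * t ^+ 2 - 0) = 2 * t by field; rewrite lt0r_neq0.
    lra.
Qed.

Lemma bexpand a c : b (a - c) (a - c) = b a a - 2 * b a c + b c c.
Proof. by rewrite !betaBl !betaBr (betaC c a); ring. Qed.

Lemma core (x y : vec) : b x x = -1 -> b y y = -1 -> b (x - y) (x - y) < 0 ->
  exists n1 n2 (s : R), [/\ b n1 n1 < 0, b n2 n2 < 0, s = 1 \/ s = -1,
    `|(Refl n2 *m (Refl n1 *m x)) ord0 0| < s * (Refl n2 *m (Refl n1 *m x)) i1 0 &
    `|(Refl n2 *m (Refl n1 *m y)) ord0 0| < s * - (Refl n2 *m (Refl n1 *m y)) i1 0].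
Proof.
move=> hx hy hsp.
set c := b x y.
have bu : b (x - y) (x - y) = -2 - 2 * c.
  by rewrite !betaBl !betaBr hx hy (betaC y x) -/c; ring.
have hc : -1 < c by lra.
set K := 2 + 2 * c.
set k := Num.sqrt K.
have hk : k ^+ 2 = K by rewrite sqr_sqrtr //; rewrite /K; lra.
have k0 : 0 <= k by exact: sqrtr_ge0.
have kp : 0 < k by rewrite sqrtr_gt0 /K; lra.
set u := x - y; set v := x + y.
have buu : b u u = -2 - 2 * c by exact: bu.
set s := (if 0 <= u i1 0 then -1 else 1 : R).
have s2 : s * s = 1 by rewrite /s; case: ifP => _; ring.
have su : s * u i1 0 <= 0.
  rewrite /s; case: ifP => h; first by rewrite mulN1r oppr_le0.
  by rewrite mul1r; apply/ltW; rewrite ltNge h.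
set us := (s * k) *: ev i1.
have bus : b us us = - K.
  rewrite betaZl betaZr beta_ev sg_neq0 ?i1_neq0 //.
  by move: hk; rewrite expr2 => hk; rewrite -hk; move: s2; nra.
have buus : b u us = - (s * k) * u i1 0.
  by rewrite betaZr beta_ev_r sg_neq0 ?i1_neq0 //; ring.
have buus0 : 0 <= b u us.
  rewrite buus; nra.
set n1 := u - us.
have bn1 : b n1 n1 < 0.
  rewrite /n1 (bexpand u us) buu bus; rewrite /K in bus *; lra.
have hn1 : b n1 n1 != 0 by rewrite lt_eqF.
have h1u : Refl n1 *m u = us.
  by apply: swap_Refl => //; rewrite buu bus /K; ring.
set v1 := Refl n1 *m v.
have bv1us : b v1 us = 0.
  rewrite -h1u Refl_beta // /u /v !betaDl !betaBr hx hy (betaC y x); ring.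
have v11 : v1 i1 0 = 0.
  move: bv1us; rewrite betaC betaZl beta_ev_l sg_neq0 ?i1_neq0 // => /eqP.
  rewrite mulf_eq0 mulf_eq0 (negbTE (lt0r_neq0 kp)) orbF.
  case/orP => [/eqP s0|]; first by move: s2; rewrite s0 mul0r => /eqP; rewrite eq_sym oner_eq0.
  by rewrite mulf_eq0 oppr_eq0 oner_eq0 => /eqP.
have bv1 : b v1 v1 = 2 * c - 2.
  rewrite Refl_beta // /v !betaDl !betaDr hx hy (betaC y x) -/c; ring.
have [w [w1 bw w0 bn2 bn20]] := @wstar v1 c k v11 hc bv1 k0 hk.
have [s' [n2 [hs' bn2n [hu hv]]]] : exists s' n2, [/\ s' = 1 \/ s' = -1, b n2 n2 < 0 &
   exists w', [/\ Refl n2 *m us = (s' * k) *: ev i1, Refl n2 *m v1 = w', w' i1 0 = 0 & `|w' ord0 0| < k]].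
  have [e0|ne0] := eqVneq (b (v1 - w) (v1 - w)) 0.
    exists (- s), (ev i1); split.
    + by rewrite /s; case: ifP => _; [left|right]; rewrite ?opprK.
    + exact: @ev_spacelike i1 i1_neq0.
    exists v1; split => //.
    + rewrite /us -scalemxAr Refl_self; last by rewrite beta_ev sg_neq0 ?i1_neq0 // oppr_eq0 oner_eq0.
      by rewrite scalerN -scaleNr mulNr.
    + by apply: Refl_fix; rewrite beta_ev_l v11 mulr0.
    + exact: bn20.
  exists s, (v1 - w); split.
  + by rewrite /s; case: ifP => _; [right|left].
  + by rewrite lt_neqAle ne0 bn2.
  exists w; split => //.
  + apply: Refl_fix; rewrite betaBl bv1us /us betaZr beta_ev_r w1; ring.
  + by apply: swap_Refl.
move: hv => [e1 e2 e3 e4].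
exists n1, n2, s'.
set P := Refl n2 *m (Refl n1 *m x); set Q := Refl n2 *m (Refl n1 *m y).
have dif : P - Q = (s' * k) *: ev i1 by rewrite /P /Q -!mulmxBr -/u h1u e1.
have sum : P + Q = hu by rewrite /P /Q -!mulmxDr -/v -/v1 e2.
clearbody P Q.
have d0 := congr1 (fun M : vec => M ord0 0) dif.
have d1 := congr1 (fun M : vec => M i1 0) dif.
have s0 := congr1 (fun M : vec => M ord0 0) sum.
have s1 := congr1 (fun M : vec => M i1 0) sum.
move: d0 d1 s0 s1 => /=; rewrite !mxE ord0_neq_i1 eqxx mulr0 mulr1 e3 => d0 d1 s0 s1.
move: e4; rewrite !ltr_norml => /andP [w1' w2'].
split => //; rewrite ?ltr_norml.
all: by case: hs' => hs; rewrite hs in d1 *; apply/andP; split; lra.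
Qed.

Local Notation Wp := (Wplus R D).

Lemma vN (M : vec) i : (- M) i 0 = - M i 0.
Proof. by rewrite mxE. Qed.

Lemma Wplus_intro z : b z z = -1 -> `|z ord0 0| < z i1 0 -> Wp z.
Proof. by move=> h1 h2; split. Qed.

Lemma orbit_intro (G : set 'M[R]_(n.+2)) g h x y : G g -> g *m h = 1%:M ->
  Wp (h *m x) -> Wp (- (h *m y)) -> pair_orbit G (Wp `*` negset Wp) (x, y).
Proof.
move=> Gg gh h1 h2; exists g; split => //; exists (h *m x, h *m y).
  by split => //=; exists (- (h *m y)) => //; rewrite opprK.
by rewrite /= !mulmxA gh !mul1mx.
Qed.

Lemma RR m v (M : 'M[R]_(n.+2, m)) : b v v != 0 -> Refl v *m (Refl v *m M) = M.
Proof. by move=> h; rewrite mulmxA Refl_invol // mul1mx. Qed.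

Lemma prod_inv4 a c e f : b a a != 0 -> b c c != 0 -> b e e != 0 -> b f f != 0 ->
  (Refl a *m Refl c *m Refl e *m Refl f) *m (Refl f *m Refl e *m Refl c *m Refl a) = 1%:M.
Proof.
move=> ha hc he hf; rewrite -!mulmxA RR // RR // RR // Refl_invol //.
Qed.

Lemma orbit_sub : pair_orbit SO (Wp `*` negset Wp) `<=` spacelike_pairs R D.
Proof.
move=> [x y] [g [[dg pg] [[q1 q2] [/= hq1 [z hz ez]] /= [-> ->]]]].
rewrite -ez; split; [|split] => /=.
- by rewrite /dS /= pg; case: hq1.
- by rewrite /dS /= pg betaNl betaNr opprK; case: hz.
- by rewrite -mulmxBr pg opprK; exact: Wplus_sum.
Qed.

Lemma orbit_wedges : pair_orbit SO (Wp `*` negset Wp) =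
   \bigcup_(W in wedges R D) (W `*` negset W).
Proof.
apply/seteqP; split.
  move=> [x y] [g [Gg [[q1 q2] [/= hq1 [z hz ez]] /= [-> ->]]]].
  exists (actset g Wp); first by exists g.
  split => /=; first by exists q1.
  by exists (g *m z); [exists z|rewrite -ez mulmxN].
move=> [x y] [W [g Gg ->]] [/= [a ha <-] [w [c hc <-] <-]].
exists g; split => //; exists (a, - c); first by split => //; exists c.
by rewrite /= mulmxN.
Qed.

Lemma flip12 (j : 'I_(n.+2)) (z : vec) : j != ord0 -> j != i1 ->
  (Refl (ev i1) *m (Refl (ev j) *m z)) ord0 0 = z ord0 0 /\
  (Refl (ev i1) *m (Refl (ev j) *m z)) i1 0 = - z i1 0.
Proof.
move=> j0 j1; rewrite !Refl_ev_coord ?i1_neq0 // ord0_neq_i1 eqxx.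
rewrite eq_sym (negbTE j0) eq_sym (negbTE j1) /=.
by split; ring.
Qed.

Lemma dS_Refl2 v w z : b v v != 0 -> b w w != 0 ->
  b (Refl v *m (Refl w *m z)) (Refl v *m (Refl w *m z)) = b z z.
Proof. by move=> hv hw; rewrite !Refl_beta. Qed.

Lemma spacelike_sub_e (hn : (0 < n)%N) :
  spacelike_pairs R D `<=` pair_orbit (SO1d_e R D) (Wp `*` negset Wp).
Proof.
move=> [x y] [/= hx [hy hsp]].
have [n1 [n2 [s [h1 h2 hs hP hQ]]]] := @core x y hx hy hsp.
have h1' : b n1 n1 != 0 by rewrite lt_eqF.
have h2' : b n2 n2 != 0 by rewrite lt_eqF.
have he1 := @ev_spacelike i1 i1_neq0.
have he1' : b (ev i1) (ev i1) != 0 by rewrite lt_eqF.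
set j2 : 'I_(n.+2) := lift ord0 (lift ord0 (Ordinal hn)).
have j20 : j2 != ord0 by rewrite eq_sym neq_lift.
have j21 : j2 != i1 by rewrite i1E (inj_eq (@lift_inj _ _)) eq_sym neq_lift.
have he2 := @ev_spacelike j2 j20.
have he2' : b (ev j2) (ev j2) != 0 by rewrite lt_eqF.
case: hs => hs; rewrite hs ?mul1r ?mulN1r in hP hQ.
- apply: (@orbit_intro _ (Refl n1 *m Refl n2 *m Refl (ev i1) *m Refl (ev i1))
     (Refl (ev i1) *m Refl (ev i1) *m Refl n2 *m Refl n1)).
  + exact: SOe_4.
  + exact: prod_inv4.
  + rewrite -!mulmxA RR //; apply: Wplus_intro => //.
    by rewrite dS_Refl2.
  + rewrite -!mulmxA RR //; apply: Wplus_intro.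
      by rewrite betaNl betaNr opprK dS_Refl2.
    by rewrite !vN normrN.
- apply: (@orbit_intro _ (Refl n1 *m Refl n2 *m Refl (ev j2) *m Refl (ev i1))
     (Refl (ev i1) *m Refl (ev j2) *m Refl n2 *m Refl n1)).
  + exact: SOe_4.
  + exact: prod_inv4.
  + rewrite -!mulmxA; have [f0 f1] := @flip12 j2 (Refl n2 *m (Refl n1 *m x)) j20 j21.
    apply: Wplus_intro; last by rewrite f0 f1.
    by rewrite !dS_Refl2.
  + rewrite -!mulmxA; have [f0 f1] := @flip12 j2 (Refl n2 *m (Refl n1 *m y)) j20 j21.
    apply: Wplus_intro; last by rewrite !vN f0 f1 normrN.
    by rewrite betaNl betaNr opprK !dS_Refl2.
Qed.

Lemma SOe_sub : SO1d_e R D `<=` SO.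
Proof. exact: connected_component_sub. Qed.

Lemma spacelike_sub : spacelike_pairs R D `<=` pair_orbit SO (Wp `*` negset Wp).
Proof.
case: (posnP n) => [n0|hn]; last first.
  move=> p /(spacelike_sub_e hn) [g [Gg rest]]; exists g; split => //.
  exact: SOe_sub.
move=> [x y] [/= hx [hy hsp]].
have [n1 [n2 [s [h1 h2 hs hP hQ]]]] := @core x y hx hy hsp.
have h1' : b n1 n1 != 0 by rewrite lt_eqF.
have h2' : b n2 n2 != 0 by rewrite lt_eqF.
case: hs => hs; rewrite hs ?mul1r ?mulN1r in hP hQ.
- apply: (@orbit_intro _ (Refl n1 *m Refl n2) (Refl n2 *m Refl n1)).
  + exact: Refl2_SO.
  + by rewrite -mulmxA RR // Refl_invol.
  + rewrite -!mulmxA; apply: Wplus_intro => //.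
    by rewrite dS_Refl2.
  + rewrite -!mulmxA; apply: Wplus_intro.
      by rewrite betaNl betaNr opprK dS_Refl2.
    by rewrite !vN normrN.
- apply: (@orbit_intro _ (- (Refl n1 *m Refl n2)) (- (Refl n2 *m Refl n1))).
  + have [dg pg] := @Refl2_SO n1 n2 h1' h2'; split.
      by rewrite -scaleN1r detZ dg n0 mulr1 expr2 mulN1r opprK.
    by move=> u w; rewrite !mulNmx betaNl betaNr opprK pg.
  + by rewrite mulNmx mulmxN opprK -mulmxA RR // Refl_invol.
  + rewrite mulNmx -!mulmxA; apply: Wplus_intro.
      by rewrite betaNl betaNr opprK dS_Refl2.
    by rewrite !vN normrN.
  + rewrite mulNmx opprK -!mulmxA; apply: Wplus_intro.
      by rewrite dS_Refl2.
    by rewrite opprK in hQ.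
Qed.

End Lor.

Theorem mainTheorem11 (R : realType) (d : nat) (hd : (1 <= d)%N) :
  spacelike_pairs R d = pair_orbit (SO1d R d) (Wplus R d `*` negset (Wplus R d))
  /\ pair_orbit (SO1d R d) (Wplus R d `*` negset (Wplus R d))
     = \bigcup_(W in wedges R d) (W `*` negset W)
  /\ ((1 < d)%N ->
      spacelike_pairs R d = pair_orbit (SO1d_e R d) (Wplus R d `*` negset (Wplus R d))).
Proof.
case: d hd => [//|n] _.
split; [|split].
- apply/seteqP; split; [exact: spacelike_sub|exact: orbit_sub].
- exact: orbit_wedges.
- move=> hn; apply/seteqP; split; first exact: spacelike_sub_e.
  move=> p [g [Gg rest]]; apply: orbit_sub; exists g; split => //.
  exact: SOe_sub.
Qed.
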